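(* Let $\mathcal{G}$ be a finite collection of nonempty subsets of $\{1,\dots,d\}$, let $n=\sum_{g\in\mathcal{G}}|g|$, and let $\mathbb{R}^n$ be partitioned into pairwise disjoint index blocks $j(g)\subseteq\{1,\dots,n\}$, $|j(g)|=|g|$, one for each $g\in\mathcal{G}$, so that for $\mathbf{x}\in\mathbb{R}^n$ the subvector $\mathbf{x}_{j(g)}\in\mathbb{R}^{|g|}$ is identified with a vector supported on the coordinates in $g$. Let $M\in\{0,1\}^{d\times n}$ be the matrix with $(M\mathbf{x})_i=\sum_{g\in\mathcal{G}:\, i\in g}(\text{entry of }\mathbf{x}_{j(g)}\text{ corresponding to coordinate }i)$. Let $\lambda>0$, $w_g>0$ for $g\in\mathcal{G}$, $\mathbf{b}\in\mathbb{R}^d$ and $\rho>0$. Define the augmented Lagrangian $$L_\rho(\mathbf{x}^1,\mathbf{x}^2;\mathbf{y})=\lambda\sum_{g\in\mathcal{G}}w_g\|\mathbf{x}^1_{j(g)}\|_2+\tfrac12\|M\mathbf{x}^2-\mathbf{b}\|_2^2+\langle\mathbf{y},\mathbf{x}^1-\mathbf{x}^2\rangle+\tfrac{\rho}{2}\|\mathbf{x}^1-\mathbf{x}^2\|_2^2,$$ for $\mathbf{x}^1,\mathbf{x}^2,\mathbf{y}\in\mathbb{R}^n$, the augmented dual function $g_\rho(\mathbf{y})=\min_{\mathbf{x}^1,\mathbf{x}^2\in\mathbb{R}^n}L_\rho(\mathbf{x}^1,\mathbf{x}^2;\mathbf{y})$, and let $Y^*$ be the set of maximizers of $g_\rho$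 over $\mathbb{R}^n$. Then there exists $\tau_d>0$ such that for all $\mathbf{y}\in\mathbb{R}^n$, $$\mathrm{dist}(\mathbf{y},Y^* )\le\tau_d\|\nabla g_\rho(\mathbf{y})\|_2 .$$
   Context: This is the reformulation of the proximal operator of the latent overlapping group lasso penalty $\Omega(\boldsymbol\beta)=\inf\{\sum_g w_g\|\boldsymbol\nu^{(g)}\|_2:\sum_g\boldsymbol\nu^{(g)}=\boldsymbol\beta,\ \boldsymbol\nu^{(g)}_{g^c}=0\}$ evaluated at $\mathbf{b}$, written as $\min_{\mathbf{x}^1,\mathbf{x}^2}\lambda\sum_g w_g\|\mathbf{x}^1_{j(g)}\|_2+\frac12\|M\mathbf{x}^2-\mathbf{b}\|_2^2$ subject to $\mathbf{x}^1=\mathbf{x}^2$; $L_\rho$ is its augmented Lagrangian with multiplier $\mathbf{y}$ for the constraint $\mathbf{x}^1=\mathbf{x}^2$, and $\mathrm{dist}(\mathbf{y},Y^* )=\inf_{\mathbf{y}^*\in Y^*}\|\mathbf{y}-\mathbf{y}^*\|_2$. *)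

(* Defs.v *)
From HB Require Import structures.
From mathcomp Require Import all_boot all_order all_algebra.
From mathcomp Require Import all_classical all_reals.
Unset Printing Implicit Defensive.
Import Order.TTheory GRing.Theory Num.Theory.
Local Open Scope ring_scope.
Local Open Scope classical_set_scope.

(* The index set of R^n, n = sum_{g in G} |g|: the pairs (g, i) with g in G
   and i in g.  The block j(g) is {(g,i) | i in g}, and its entry (g,i)
   corresponds to coordinate i of {1..d}. *)
Definition gpred (d : nat) (G : {set {set 'I_d}}) : pred ({set 'I_d} * 'I_d) :=
  fun p => (p.1 \in G) && (p.2 \in p.1).
Definition gidx (d : nat) (G : {set {set 'I_d}}) := {p | gpred d G p}.

Section Defs.
Variables (R : realType) (d : nat) (G : {set {set 'I_d}}).
Local Notation I := (gidx d G).

Definition vdot (x y : I -> R) : R := \sum_(k : I) x k * y k.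
Definition vnorm (x : I -> R) : R := Num.sqrt (vdot x x).
Definition dnorm (z : 'I_d -> R) : R := Num.sqrt (\sum_(i : 'I_d) z i ^+ 2).

Definition blocknorm (x : I -> R) (g : {set 'I_d}) : R :=
  Num.sqrt (\sum_(k : I | (val k).1 == g) x k ^+ 2).

Definition Mop (x : I -> R) : 'I_d -> R :=
  fun i => \sum_(k : I | (val k).2 == i) x k.

Definition Lrho (lambda rho : R) (w : {set 'I_d} -> R) (b : 'I_d -> R)
  (x1 x2 y : I -> R) : R :=
  lambda * (\sum_(g in G) w g * blocknorm x1 g)
  + 2^-1 * (dnorm (fun i => Mop x2 i - b i)) ^+ 2
  + vdot y (fun k => x1 k - x2 k)
  + rho / 2 * (vnorm (fun k => x1 k - x2 k)) ^+ 2.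

Definition grho lambda rho w b (y : I -> R) : R :=
  inf [set Lrho lambda rho w b x1 x2 y | x1 in [set: I -> R] & x2 in [set: I -> R]].

Definition Ystar lambda rho w b : set (I -> R) :=
  [set y | forall y', grho lambda rho w b y' <= grho lambda rho w b y].

Definition vdist (y : I -> R) (S : set (I -> R)) : R :=
  inf [set vnorm (fun k => y k - z k) | z in S].

Definition is_gradient (f : (I -> R) -> R) (y v : I -> R) : Prop :=
  forall eps : R, 0 < eps -> exists2 delta : R, 0 < delta &
    forall h : I -> R, vnorm h < delta ->
      `| f (fun k => y k + h k) - f y - vdot v h | <= eps * vnorm h.

End Defs.

(* Main.v *)
Require Import Defs.
From HB Require Import structures.
From mathcomp Require Import all_boot all_order all_algebra.
From mathcomp Require Import all_classical all_reals.
From mathcomp Require Import topology normedtype derive realfun.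
From mathcomp Require Import ring lra.
Import Order.TTheory GRing.Theory Num.Theory.
Import numFieldNormedType.Exports.
Local Open Scope ring_scope.
Local Open Scope classical_set_scope.

Section Alg.
Variable R : realType.

Lemma CS (T : finType) (P : pred T) (x y : T -> R) :
  (\sum_(k | P k) x k * y k) ^+ 2 <=
  (\sum_(k | P k) x k ^+ 2) * (\sum_(k | P k) y k ^+ 2).
Proof.
set A := \sum_(k | P k) x k ^+ 2; set B := \sum_(k | P k) y k ^+ 2.
set S := \sum_(k | P k) x k * y k.
have A0 : 0 <= A by apply: sumr_ge0 => k _; exact: sqr_ge0.
have E : \sum_(k | P k) (A * y k - S * x k) ^+ 2 = A * (A * B - S ^+ 2).
  transitivity (\sum_(k | P k) (A^+2 * y k^+2 + (-2*A*S) * (x k * y k) + S^+2 * x k^+2)).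
    by apply: eq_bigr => k _; ring.
  rewrite !big_split /= -!mulr_sumr -/A -/B -/S; ring.
have H : 0 <= A * (A * B - S ^+ 2).
  by rewrite -E; apply: sumr_ge0 => k _; exact: sqr_ge0.
have [Ap|] := ltrP 0 A.
  by move: H; rewrite pmulr_rge0 // subr_ge0.
move=> Ale; have A00 : A = 0 by apply/le_anti; rewrite Ale A0.
have xk : forall k, P k -> x k = 0.
  move=> k Pk; apply/eqP; rewrite -sqrf_eq0; apply/eqP.
  by move: k Pk; apply/psumr_eq0P => //; [move=> k _; exact: sqr_ge0].
have -> : S = 0 by rewrite /S big1 // => k Pk; rewrite xk // mul0r.
by rewrite expr0n /= mulr_ge0 // ?A0 // /B sumr_ge0 // => k _; exact: sqr_ge0.
Qed.

Lemma sumr_sq_ge0 (T : finType) (P : pred T) (x : T -> R) :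
  0 <= \sum_(k | P k) x k ^+ 2.
Proof. by apply: sumr_ge0 => k _; exact: sqr_ge0. Qed.

Lemma abs_CS (T : finType) (P : pred T) (x y : T -> R) :
  `|\sum_(k | P k) x k * y k| <=
  Num.sqrt (\sum_(k | P k) x k ^+ 2) * Num.sqrt (\sum_(k | P k) y k ^+ 2).
Proof.
rewrite -sqrtrM ?sumr_sq_ge0 // -sqrtr_sqr.
by apply: ler_wsqrtr; exact: CS.
Qed.

Lemma quad_zero (a c : R) : 0 <= c ->
  (forall t, `|t| < 1 -> 0 <= t * a + t ^+ 2 * c) -> a = 0.
Proof.
move=> c0 H; apply/eqP; apply/negPn/negP => a0.
set D := 2 * (c + 1) * (`|a| + 1).
have D0 : 0 < D by rewrite /D !mulr_gt0 // ltr_wpDl.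
set t := - a / D.
have tlt : `|t| < 1.
  rewrite /t normrM normrN normfV (gtr0_norm D0) ltr_pdivrMr // mul1r /D.
  have := normr_ge0 a; nra.
have := H t tlt.
have E : t * a + t ^+ 2 * c = a ^+ 2 / D * (c / D - 1).
  by rewrite /t; field; rewrite gt_eqF.
have a2 : 0 < a ^+ 2 / D by rewrite divr_gt0 // lt_def sqrf_eq0 a0 sqr_ge0.
rewrite E pmulr_rge0 // subr_ge0 ler_pdivlMr // mul1r /D => h.
have : c < 2 * (c + 1) * (`|a| + 1) by have := normr_ge0 a; nra.
by rewrite ltNge h.
Qed.

Lemma lin_ge0 (A c : R) : 0 <= c ->
  (forall t, 0 < t < 1 -> 0 <= A + t * c) -> 0 <= A.
Proof.
move=> c0 H; rewrite leNgt; apply/negP => A0.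
set t := - A / (2 * (c + 1) * (1 - A)).
have D0 : 0 < 2 * (c + 1) * (1 - A) by rewrite !mulr_gt0 //; lra.
have t0 : 0 < t by rewrite /t divr_gt0 //; lra.
have t1 : t < 1.
  rewrite /t ltr_pdivrMr // mul1r.
  have : 1 <= 2 * (c + 1) by lra.
  move=> h; apply: (lt_le_trans (y := 1 - A)); first lra.
  by rewrite ler_peMl //; lra.
have := H t; rewrite t0 t1 => /(_ isT).
have E : A + t * c = A * (1 - c / (2 * (c + 1) * (1 - A))).
  by rewrite /t; field; apply/andP; split; lra.
rewrite E; apply/negP; rewrite -ltNge nmulr_rlt0 // subr_gt0 ltr_pdivrMr // mul1r.
apply: (lt_le_trans (y := 2 * (c + 1))); first lra.
by rewrite ler_peMr; lra.
Qed.
End Alg.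

Section Main.
Variables (R : realType) (d : nat) (G : {set {set 'I_d}}).
Local Notation I := (gidx d G).
Local Notation vdot := (vdot R d G).
Local Notation vnorm := (vnorm R d G).
Local Notation dnorm := (dnorm R d).
Local Notation N := (blocknorm R d G).
Local Notation Mop := (Mop R d G).

Definition MT (u : 'I_d -> R) : I -> R := fun k => u (val k).2.
Definition bdot (x y : I -> R) g := \sum_(k : I | (val k).1 == g) x k * y k.

Lemma vdot_sq x : vdot x x = \sum_k x k ^+ 2.
Proof. by apply: eq_bigr => k _; rewrite expr2. Qed.

Lemma vnorm_sq x : vnorm x ^+ 2 = vdot x x.
Proof. by rewrite /vnorm sqr_sqrtr // vdot_sq sumr_sq_ge0. Qed.

Lemma dnorm_sq u : dnorm u ^+ 2 = \sum_i u i ^+ 2.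
Proof. by rewrite /dnorm sqr_sqrtr // sumr_sq_ge0. Qed.

Lemma N_ge0 x g : 0 <= N x g.
Proof. exact: sqrtr_ge0. Qed.

Lemma bdot_le x y g : `|bdot x y g| <= N x g * N y g.
Proof. exact: abs_CS. Qed.

Lemma MT_dot u x : vdot (MT u) x = \sum_i u i * Mop x i.
Proof.
rewrite /Defs.vdot /Defs.Mop.
under [RHS]eq_bigr do rewrite mulr_sumr.
rewrite (partition_big (fun k : I => (val k).2) xpredT) //=.
by apply: eq_bigr => i _; apply: eq_bigr => k /eqP <-.
Qed.

Lemma vdot_blocks z x : vdot z x = \sum_(g in G) bdot z x g.
Proof.
rewrite /Defs.vdot (partition_big (fun k : I => (val k).1) (mem G)) //=.
by move=> k _; case: k => -[g i] /= /andP[].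
Qed.

Lemma vdotC x y : vdot x y = vdot y x.
Proof. by apply: eq_bigr => k _; rewrite mulrC. Qed.


Variables (lambda rho : R) (w : {set 'I_d} -> R) (b : 'I_d -> R).
Hypotheses (lam0 : 0 < lambda) (w0 : forall g, g \in G -> 0 < w g) (rho0 : 0 < rho).
Local Notation L := (Lrho R d G lambda rho w b).

Definition f1 x := lambda * \sum_(g in G) w g * N x g.
Definition Phi (y : I -> R) (u : 'I_d -> R) :=
  - (2^-1 * \sum_i u i ^+ 2) - \sum_i u i * b i
  - (2 * rho)^-1 * \sum_k (MT u k - y k) ^+ 2.
Definition feas u := forall g, g \in G -> N (MT u) g <= lambda * w g.

Lemma L_ident x1 x2 y u : L x1 x2 y = Phi y u + (f1 x1 + vdot (MT u) x1)
  + 2^-1 * \sum_i (Mop x2 i - b i - u i) ^+ 2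
  + (2 * rho)^-1 * \sum_k (rho * (x1 k - x2 k) + y k - MT u k) ^+ 2.
Proof.
have E4 : \sum_i (Mop x2 i - b i - u i) ^+ 2 = \sum_i (Mop x2 i - b i) ^+ 2
   + (-2) * \sum_i u i * Mop x2 i + 2 * \sum_i u i * b i + \sum_i u i ^+ 2.
  rewrite !mulr_sumr -!big_split /=; apply: eq_bigr => i _; ring.
have E1 : \sum_k (rho * (x1 k - x2 k) + y k - MT u k) ^+ 2 =
   rho ^+ 2 * \sum_k (x1 k - x2 k) ^+ 2 + (2 * rho) * \sum_k y k * (x1 k - x2 k)
   + (- 2 * rho) * \sum_k MT u k * (x1 k - x2 k) + \sum_k (MT u k - y k) ^+ 2.
  rewrite !mulr_sumr -!big_split /=; apply: eq_bigr => i _; ring.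
have E2 : vdot (MT u) x1 = \sum_k MT u k * (x1 k - x2 k) + vdot (MT u) x2.
  rewrite /Defs.vdot -big_split /=; apply: eq_bigr => i _; ring.
rewrite E4 E1 E2 MT_dot /Lrho dnorm_sq vnorm_sq vdot_sq /Phi /f1 /Defs.vdot.
rewrite -/(Mop x2).
field; rewrite gt_eqF //.
Qed.


Lemma f1_dot x z : f1 x + vdot z x = \sum_(g in G) (lambda * w g * N x g + bdot z x g).
Proof. by rewrite vdot_blocks /f1 big_split /= mulr_sumr; congr (_ + _); apply: eq_bigr => g _; rewrite mulrA. Qed.

Lemma f1_dot_ge0 x u : feas u -> 0 <= f1 x + vdot (MT u) x.
Proof.
move=> fu; rewrite f1_dot; apply: sumr_ge0 => g gG.
have h1 := bdot_le (MT u) x g.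
have h2 : N (MT u) g * N x g <= lambda * w g * N x g by rewrite ler_wpM2r ?N_ge0 ?fu.
have h3 := ler_normr (bdot (MT u) x g) (- bdot (MT u) x g); rewrite normrN in h3.
have h4 : - bdot (MT u) x g <= `|bdot (MT u) x g| by rewrite ler_normr lexx orbT.
lra.
Qed.

Lemma WD x1 x2 y u : feas u -> Phi y u <= L x1 x2 y.
Proof.
move=> fu; rewrite (L_ident x1 x2 y u).
have h1 := @f1_dot_ge0 x1 u fu.

have h2 : 0 <= 2^-1 * \sum_i (Mop x2 i - b i - u i) ^+ 2.
  by apply: mulr_ge0; [rewrite invr_ge0 | apply: sumr_sq_ge0].
have h3 : 0 <= (2 * rho)^-1 * \sum_k (rho * (x1 k - x2 k) + y k - MT u k) ^+ 2.
  apply: mulr_ge0; last exact: sumr_sq_ge0.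
  by rewrite invr_ge0 mulr_ge0 // ltW.
lra.
Qed.

Definition Lset y := [set L x1 x2 y | x1 in [set: I -> R] & x2 in [set: I -> R]].

Lemma grho_ge y u : feas u -> Phi y u <= grho R d G lambda rho w b y.
Proof.
move=> fu; apply: lb_le_inf.
  by exists (L 0 0 y); exists 0 => //; exists 0.
by move=> _ [x1 _ [x2 _ <-]]; exact: WD.
Qed.

Lemma grho_le y x1 x2 u : feas u -> grho R d G lambda rho w b y <= L x1 x2 y.
Proof.
move=> fu; apply: ge_inf; last by exists x1 => //; exists x2.
by exists (Phi y u) => _ [z1 _ [z2 _ <-]]; exact: WD.
Qed.


Definition restr g (v : I -> R) : I -> R := fun k => if (val k).1 == g then v k else 0.

Lemma N_ext x y g : (forall k : I, (val k).1 == g -> x k = y k) -> N x g = N y g.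
Proof. by move=> h; rewrite /blocknorm; congr Num.sqrt; apply: eq_bigr => k /h ->. Qed.

Lemma N_scale a x g : N (fun k => a * x k) g = `|a| * N x g.
Proof.
rewrite /blocknorm -sqrtr_sqr -sqrtrM ?sqr_ge0 // mulr_sumr; congr Num.sqrt.
by apply: eq_bigr => k _; rewrite exprMn.
Qed.

Lemma N_add x y g : N (fun k => x k + y k) g <= N x g + N y g.
Proof.
have h : N (fun k => x k + y k) g ^+ 2 <= (N x g + N y g) ^+ 2.
  rewrite /blocknorm sqrrD !sqr_sqrtr ?sumr_sq_ge0 //.
  have -> : \sum_(k | (val k).1 == g) (x k + y k) ^+ 2 =
    \sum_(k | (val k).1 == g) x k ^+ 2 + 2 * \sum_(k | (val k).1 == g) x k * y k
    + \sum_(k | (val k).1 == g) y k ^+ 2.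
    rewrite (eq_bigr (fun k => x k ^+ 2 + 2 * (x k * y k) + y k ^+ 2)); last by move=> k _; ring.
    by rewrite !big_split /= mulr_sumr.
  have := @abs_CS R _ (fun k : I => (val k).1 == g) x y.
  have := ler_norm (\sum_(k | (val k).1 == g) x k * y k).
  by rewrite mulr2n; lra.
rewrite -(ler_pXn2r (n := 2)) // nnegrE ?addr_ge0 ?N_ge0 //.
Qed.

Lemma vdot_restr z g v : vdot z (restr g v) = bdot z v g.
Proof.
rewrite /Defs.vdot /bdot [RHS]big_mkcond /=; apply: eq_bigr => k _.
by rewrite /restr; case: ifP => _; rewrite ?mulr0.
Qed.

Lemma restr_supp g v k : (val k).1 != g -> restr g v k = 0.
Proof. by rewrite /restr => /negbTE ->. Qed.

Lemma f1_pert x g dl : g \in G -> (forall k : I, (val k).1 != g -> dl k = 0) ->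
  f1 (fun k => x k + dl k) - f1 x = lambda * w g * (N (fun k => x k + dl k) g - N x g).
Proof.
move=> gG hd; rewrite /f1 (bigD1 g gG) [in X in _ - X](bigD1 g gG) /=.
have -> : \sum_(i in G | i != g) w i * N (fun k => x k + dl k) i =
          \sum_(i in G | i != g) w i * N x i.
  apply: eq_bigr => i /andP[_ ig]; congr (_ * _); apply: N_ext => k /eqP ki.
  by rewrite hd ?addr0 // ki.
ring.
Qed.


Lemma N_sq x g : N x g ^+ 2 = \sum_(k | (val k).1 == g) x k ^+ 2.
Proof. by rewrite /blocknorm sqr_sqrtr // sumr_sq_ge0. Qed.

Lemma FO_block x z g : g \in G ->
  (forall dl, (forall k : I, (val k).1 != g -> dl k = 0) -> exists2 c, 0 <= c &
     forall t, 0 <= lambda * w g * (N (fun k => x k + t * dl k) g - N x g)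
                  + t * vdot z dl + t ^+ 2 * c) ->
  N z g <= lambda * w g /\ lambda * w g * N x g + bdot z x g = 0.
Proof.
move=> gG H; have lw : 0 < lambda * w g by rewrite mulr_gt0 // w0.
split.
  have [c c0 Hc] := H (restr g (fun k => - z k)) (@restr_supp g _).
  have Hz : vdot z (restr g (fun k => - z k)) = - N z g ^+ 2.
    rewrite vdot_restr /bdot N_sq -sumrN; apply: eq_bigr => k _; ring.
  have key : forall t, 0 < t < 1 -> 0 <= (lambda * w g * N z g - N z g ^+ 2) + t * c.
    move=> t /andP[t0 t1]; have := Hc t; rewrite Hz.
    have hN : N (fun k => x k + t * restr g (fun k => - z k) k) g <= N x g + t * N z g.
      rewrite (@N_ext _ (fun k => x k + t * - z k) g); last first.
        by move=> k kg; rewrite /restr kg.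
      apply: (le_trans (N_add _ _ _)); rewrite N_scale.
      rewrite (@N_ext (fun k => - z k) (fun k => (-1) * z k) g); last by move=> k _; rewrite mulN1r.
      by rewrite N_scale normrN normr1 mul1r (gtr0_norm t0).
    have hN' := ler_wpM2l (ltW lw) hN.
    move=> h.
    have : 0 <= t * ((lambda * w g * N z g - N z g ^+ 2) + t * c) by nra.
    by rewrite pmulr_rge0.
  have := @lin_ge0 R _ _ c0 key.
  have [nz0|nzp] := eqVneq (N z g) 0; first by rewrite nz0 => _; exact: ltW.
  have nzpos : 0 < N z g by rewrite lt_def nzp N_ge0.
  rewrite expr2 -mulrBl pmulr_lge0 // subr_ge0 //.
have [c c0 Hc] := H (restr g x) (@restr_supp g _).
apply: (@quad_zero R _ _ c0) => t tlt.
have := Hc t; rewrite vdot_restr.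
rewrite (@N_ext _ (fun k => (1 + t) * x k) g); last first.
  by move=> k kg; rewrite /restr kg; ring.
rewrite N_scale (ger0_norm (x := 1 + t)); last first.
  by move: tlt; rewrite ltr_norml => /andP[h _]; lra.
move=> h; have -> : t * (lambda * w g * N x g + bdot z x g) + t ^+ 2 * c =
  lambda * w g * ((1 + t) * N x g - N x g) + t * bdot z x g + t ^+ 2 * c by ring.
exact: h.
Qed.


Lemma L_unf x1 x2 y : L x1 x2 y = f1 x1 + 2^-1 * \sum_i (Mop x2 i - b i) ^+ 2
  + \sum_k y k * (x1 k - x2 k) + rho / 2 * \sum_k (x1 k - x2 k) ^+ 2.
Proof. by rewrite /Lrho dnorm_sq vnorm_sq vdot_sq. Qed.

Lemma Mop_lin x dl t i : Mop (fun k => x k + t * dl k) i = Mop x i + t * Mop dl i.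
Proof. by rewrite /Defs.Mop big_split mulr_sumr. Qed.

Lemma L_exp x1 x2 y dl1 dl2 t :
 L (fun k => x1 k + t * dl1 k) (fun k => x2 k + t * dl2 k) y - L x1 x2 y =
 (f1 (fun k => x1 k + t * dl1 k) - f1 x1)
 + t * (\sum_k (MT (fun i => Mop x2 i - b i) k * dl2 k
              + (y k + rho * (x1 k - x2 k)) * (dl1 k - dl2 k)))
 + t ^+ 2 * (2^-1 * \sum_i Mop dl2 i ^+ 2 + rho / 2 * \sum_k (dl1 k - dl2 k) ^+ 2).
Proof.
rewrite !L_unf.
under eq_bigr do rewrite Mop_lin.
have Ea : \sum_i (Mop x2 i + t * Mop dl2 i - b i) ^+ 2 = \sum_i (Mop x2 i - b i) ^+ 2
   + (2 * t) * \sum_i (Mop x2 i - b i) * Mop dl2 i + t ^+ 2 * \sum_i Mop dl2 i ^+ 2.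
  rewrite !mulr_sumr -!big_split /=; apply: eq_bigr => i _; ring.
have Eb : \sum_k y k * (x1 k + t * dl1 k - (x2 k + t * dl2 k)) =
   \sum_k y k * (x1 k - x2 k) + t * \sum_k y k * (dl1 k - dl2 k).
  rewrite !mulr_sumr -!big_split /=; apply: eq_bigr => i _; ring.
have Ec : \sum_k (x1 k + t * dl1 k - (x2 k + t * dl2 k)) ^+ 2 =
   \sum_k (x1 k - x2 k) ^+ 2 + (2 * t) * \sum_k (x1 k - x2 k) * (dl1 k - dl2 k)
   + t ^+ 2 * \sum_k (dl1 k - dl2 k) ^+ 2.
  rewrite !mulr_sumr -!big_split /=; apply: eq_bigr => i _; ring.
have Ed : \sum_k (MT (fun i => Mop x2 i - b i) k * dl2 k
              + (y k + rho * (x1 k - x2 k)) * (dl1 k - dl2 k)) =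
   \sum_i (Mop x2 i - b i) * Mop dl2 i + \sum_k y k * (dl1 k - dl2 k)
   + rho * \sum_k (x1 k - x2 k) * (dl1 k - dl2 k).
  rewrite -(MT_dot (fun i => Mop x2 i - b i) dl2) /Defs.vdot.
  rewrite !mulr_sumr -!big_split /=; apply: eq_bigr => i _; ring.
rewrite Ea Eb Ec Ed; field; done.
Qed.


Lemma sum_sq_eq0 (F : I -> R) : \sum_k F k ^+ 2 = 0 -> forall k, F k = 0.
Proof.
move=> h k; apply/eqP; rewrite -sqrf_eq0; apply/eqP.
by move: k (erefl true); apply/psumr_eq0P => // k _; exact: sqr_ge0.
Qed.

Lemma blocks_zero x z : (forall g, g \in G -> lambda * w g * N x g + bdot z x g = 0) ->
  f1 x + vdot z x = 0.
Proof. by move=> h; rewrite f1_dot big1. Qed.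

Lemma cge0 A B : 0 <= A -> 0 <= B -> 0 <= 2^-1 * A + rho / 2 * B.
Proof. by move=> hA hB; have := rho0; nra. Qed.

Lemma saddle_of_min y x1 x2 : (forall x1' x2', L x1 x2 y <= L x1' x2' y) ->
  feas (fun i => Mop x2 i - b i) /\ L x1 x2 y = Phi y (fun i => Mop x2 i - b i) /\
  (forall k, rho * (x1 k - x2 k) + y k - MT (fun i => Mop x2 i - b i) k = 0).
Proof.
move=> Hmin; set u := fun i => Mop x2 i - b i.
have grad : forall k, rho * (x1 k - x2 k) + y k - MT u k = 0.
  set a := fun k => MT u k - y k - rho * (x1 k - x2 k).
  suff ha : \sum_k a k ^+ 2 = 0.
    by move=> k; have := @sum_sq_eq0 a ha k; rewrite /a => h; lra.
  set c := 2^-1 * \sum_i Mop a i ^+ 2 + rho / 2 * \sum_k (0 - a k) ^+ 2.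
  have c0 : 0 <= c.
    by apply: cge0; apply: sumr_sq_ge0.
  apply: (@quad_zero R _ c c0) => t _.
  have := Hmin x1 (fun k => x2 k + t * a k).
  have E := L_exp x1 x2 y (fun _ => 0) a t.
  have e1 : (fun k => x1 k + t * 0) = x1 by apply/funext => k; rewrite mulr0 addr0.
  rewrite e1 subrr add0r -/u -/c in E.
  have e2 : \sum_k (MT u k * a k + (y k + rho * (x1 k - x2 k)) * (0 - a k)) = \sum_k a k ^+ 2.
    by apply: eq_bigr => k _; rewrite /a; ring.
  rewrite e2 in E; rewrite -subr_ge0 E.
  by [].
have fe : forall g, g \in G -> N (MT u) g <= lambda * w g /\
                     lambda * w g * N x1 g + bdot (MT u) x1 g = 0.
  move=> g gG; apply: FO_block => // dl hdl.
  exists (2^-1 * \sum_i Mop (fun _ => 0) i ^+ 2 + rho / 2 * \sum_k (dl k - 0) ^+ 2).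
    by apply: cge0; apply: sumr_sq_ge0.
  move=> t; have := Hmin (fun k => x1 k + t * dl k) x2.
  have E := L_exp x1 x2 y dl (fun _ => 0) t.
  have e1 : (fun k => x2 k + t * 0) = x2 by apply/funext => k; rewrite mulr0 addr0.
  rewrite e1 -/u in E.
  rewrite (@f1_pert x1 g (fun k => t * dl k)) // in E; last first.
    by move=> k /hdl ->; rewrite mulr0.
  have e2 : \sum_k (MT u k * 0 + (y k + rho * (x1 k - x2 k)) * (dl k - 0)) = vdot (MT u) dl.
    by apply: eq_bigr => k _; have := grad k; move=> h; rewrite mulr0 add0r subr0; congr (_ * _); lra.
  by rewrite e2 in E; rewrite -subr_ge0 E.
have feasu : feas u by move=> g /fe [].
have zero : f1 x1 + vdot (MT u) x1 = 0 by apply: blocks_zero => g /fe [].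
split => //; split => //.
rewrite (L_ident x1 x2 y u) zero.
rewrite big1; last by move=> i _; rewrite /u; ring.
rewrite big1; last by move=> k _; rewrite grad expr2 mulr0.
by rewrite !mulr0 !addr0.
Qed.


Lemma primal_of_min x : (forall x', L x x 0 <= L x' x' 0) ->
  feas (fun i => Mop x i - b i) /\ f1 x + vdot (MT (fun i => Mop x i - b i)) x = 0.
Proof.
move=> Hmin; set u := fun i => Mop x i - b i.
have fe : forall g, g \in G -> N (MT u) g <= lambda * w g /\
                     lambda * w g * N x g + bdot (MT u) x g = 0.
  move=> g gG; apply: FO_block => // dl hdl.
  exists (2^-1 * \sum_i Mop dl i ^+ 2 + rho / 2 * \sum_k (dl k - dl k) ^+ 2).
    by apply: cge0; apply: sumr_sq_ge0.
  move=> t; have := Hmin (fun k => x k + t * dl k).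
  have E := L_exp x x 0 dl dl t.
  rewrite -/u in E.
  rewrite (@f1_pert x g (fun k => t * dl k)) // in E; last first.
    by move=> k /hdl ->; rewrite mulr0.
  have e2 : \sum_k (MT u k * dl k + (0 + rho * (x k - x k)) * (dl k - dl k)) = vdot (MT u) dl.
    by apply: eq_bigr => k _; rewrite !subrr mulr0 addr0.
  by rewrite e2 in E; rewrite -subr_ge0 E.
split; first by move=> g /fe [].
by apply: blocks_zero => g /fe [].
Qed.

Lemma L_diag x y y' : L x x y = L x x y'.
Proof.
rewrite !L_unf; congr (_ + _ + _).
by rewrite !big1 // => k _; rewrite subrr mulr0.
Qed.

Definition mI : R := \sum_(k : I) (1 : R) + 1.

Lemma mI_gt0 : 0 < mI.
Proof. by rewrite /mI ltr_pwDr // sumr_ge0. Qed.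

Lemma MT_bound (dl : 'I_d -> R) :
  \sum_k MT dl k ^+ 2 <= mI * \sum_i dl i ^+ 2.
Proof.
have h : forall k : I, MT dl k ^+ 2 <= \sum_i dl i ^+ 2.
  move=> k; rewrite (bigD1 (val k).2) //= lerDl.
  by apply: sumr_ge0 => i _; exact: sqr_ge0.
apply: (le_trans (ler_sum _ (fun k _ => h k))).
rewrite /mI mulrDl mul1r mulr_suml; under [X in _ <= X + _]eq_bigr do rewrite mul1r.
by rewrite lerDl sumr_sq_ge0.
Qed.


Local Notation grho := (grho R d G lambda rho w b).
Local Notation Ystar := (Ystar R d G lambda rho w b).

Lemma grho_saddle y x1 x2 u : feas u -> L x1 x2 y = Phi y u -> grho y = Phi y u.
Proof.
move=> fu e; apply/le_anti; rewrite grho_ge // andbT.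
by rewrite -e; exact: grho_le fu.
Qed.

Lemma sqrt_sumsq_scale a (F : I -> R) : 0 <= a ->
  Num.sqrt (\sum_k (a * F k) ^+ 2) = a * Num.sqrt (\sum_k F k ^+ 2).
Proof.
move=> a0; rewrite -{2}(ger0_norm a0) -sqrtr_sqr -sqrtrM ?sqr_ge0 // mulr_sumr.
by congr Num.sqrt; apply: eq_bigr => k _; rewrite exprMn.
Qed.

Lemma main_of_ex :
  (forall y, exists x1 x2, forall x1' x2', L x1 x2 y <= L x1' x2' y) ->
  (exists x, forall x', L x x 0 <= L x' x' 0) ->
  Ystar !=set0 /\
  exists2 tau : R, 0 < tau &
    forall y : I -> R, exists v : I -> R,
      is_gradient R d G grho y v /\ vdist R d G y Ystar <= tau * vnorm v.
Proof.
move=> EX1 [x Hx].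
have [feas_s zero_s] := @primal_of_min x Hx.
set us := (fun i => Mop x i - b i) in feas_s zero_s.
set ys := MT us.
have Lx : forall y', L x x y' = Phi ys us.
  move=> y'; rewrite (L_diag x y' ys) (L_ident x x ys us) zero_s.
  rewrite big1; last by move=> i _; rewrite /us; ring.
  rewrite big1; last by move=> k _; rewrite /ys; rewrite subrr mulr0 add0r subrr expr2 mulr0.
  by rewrite !mulr0 !addr0.
have ysY : Ystar ys.
  move=> y'; apply: (le_trans (@grho_le y' x x us feas_s)).
  by rewrite Lx; exact: (@grho_ge ys us feas_s).
split; first by exists ys.
exists (mI + 2 * rho); first by rewrite addr_gt0 ?mI_gt0 // mulr_gt0.
move=> y; have [x1 [x2 Hmin]] := EX1 y.
have [fu [Leq grad]] := @saddle_of_min y x1 x2 Hmin.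
set u := (fun i => Mop x2 i - b i) in fu Leq grad.
set z := MT u in grad.
set v := fun k => x1 k - x2 k.
have zy : forall k, z k - y k = rho * v k by move=> k; have := grad k; rewrite /v; lra.
have gy := @grho_saddle y x1 x2 u fu Leq.
exists v; split.
  move=> eps eps0; exists (2 * rho * eps); first by rewrite !mulr_gt0.
  move=> h hlt.
  set yh := fun k => y k + h k.
  have up : grho yh <= grho y + vdot v h.
    apply: (le_trans (@grho_le yh x1 x2 u fu)).
    rewrite gy -Leq !L_unf /Defs.vdot.
    have -> : \sum_k yh k * (x1 k - x2 k) = \sum_k y k * (x1 k - x2 k) + \sum_k v k * h k.
      by rewrite -big_split; apply: eq_bigr => k _; rewrite /yh /v /=; ring.
    lra.
  have low : grho y + vdot v h - (2 * rho)^-1 * vdot h h <= grho yh.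
    apply: (le_trans _ (@grho_ge yh u fu)).
    rewrite gy /Phi /Defs.vdot.
    have -> : \sum_k (MT u k - yh k) ^+ 2 = \sum_k (MT u k - y k) ^+ 2
         + (- 2 * rho) * \sum_k v k * h k + \sum_k h k * h k.
      rewrite mulr_sumr -!big_split; apply: eq_bigr => k _.
      have := zy k; rewrite /z /yh => e.
      have -> : MT u k - (y k + h k) = (MT u k - y k) - h k by ring.
      rewrite e /v /=; ring.
    rewrite le_eqVlt; apply/orP; left; apply/eqP; field.
    by rewrite gt_eqF.
  have hh : vdot h h = vnorm h * vnorm h by rewrite -expr2 vnorm_sq.
  have hn0 : 0 <= vnorm h by exact: sqrtr_ge0.
  have k0 : 0 < (2 * rho)^-1 by rewrite invr_gt0 mulr_gt0.
  have bnd : (2 * rho)^-1 * vdot h h <= eps * vnorm h.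
    rewrite hh mulrA ler_wpM2r //.
    rewrite ler_pdivrMl ?mulr_gt0 //; exact: ltW.
  rewrite ler_norml; apply/andP; split; lra.
have dle : vdist R d G y Ystar <= vnorm (fun k => y k - ys k).
  apply: ge_inf; last by exists ys.
  by exists 0 => _ [z' _ <-]; exact: sqrtr_ge0.
apply: (le_trans dle).
set A1 := \sum_k (z k - y k) ^+ 2.
set A2 := \sum_k (ys k - y k) ^+ 2.
set S := \sum_k (z k - ys k) ^+ 2.
set D := \sum_i (u i - us i) ^+ 2.
set P := \sum_k (ys k - y k) * (z k - y k).
have F1 : Phi y us + 2^-1 * D + (2 * rho)^-1 * S <= Phi y u.
  rewrite -Leq (L_ident x1 x2 y us).
  have h1 := @f1_dot_ge0 x1 us feas_s.
  have -> : \sum_i (Mop x2 i - b i - us i) ^+ 2 = D by [].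
  have -> : \sum_k (rho * (x1 k - x2 k) + y k - MT us k) ^+ 2 = S.
    apply: eq_bigr => k _; have := zy k; rewrite /v /z /ys => e.
    congr (_ ^+ 2); lra.
  lra.
have F2 : Phi ys u + 2^-1 * D + (2 * rho)^-1 * S <= Phi ys us.
  rewrite -(Lx ys) (L_ident x x ys u).
  have h1 := @f1_dot_ge0 x u fu.
  have -> : \sum_i (Mop x i - b i - u i) ^+ 2 = D.
    by apply: eq_bigr => i _; rewrite /us; ring.
  have -> : \sum_k (rho * (x k - x k) + ys k - MT u k) ^+ 2 = S.
    by apply: eq_bigr => k _; rewrite /z; ring.
  lra.
have P1 : Phi y u = - (2^-1 * \sum_i u i ^+ 2) - \sum_i u i * b i - (2 * rho)^-1 * A1 by [].
have P2 : Phi y us = - (2^-1 * \sum_i us i ^+ 2) - \sum_i us i * b i - (2 * rho)^-1 * A2 by [].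
have P3 : Phi ys u = - (2^-1 * \sum_i u i ^+ 2) - \sum_i u i * b i - (2 * rho)^-1 * S.
  rewrite /Phi; congr (_ - _ * _); apply: eq_bigr => k _; rewrite /z; ring.
have P4 : Phi ys us = - (2^-1 * \sum_i us i ^+ 2) - \sum_i us i * b i.
  rewrite /Phi (_ : \sum_(k : I) (MT us k - ys k) ^+ 2 = 0) ?mulr0 ?subr0 //.
  by rewrite big1 // => k _; rewrite subrr expr2 mulr0.
have kD : D <= (2 * rho)^-1 * (A2 - A1 - S).
  rewrite P1 P2 in F1; rewrite P3 P4 in F2; lra.
have ED : 2 * rho * D <= A2 - A1 - S.
  by rewrite -ler_pdivlMl ?mulr_gt0 //.
have SD : S <= mI * D.
  have := MT_bound (fun i => u i - us i).
  congr (_ <= _); apply: eq_bigr => k _; rewrite /z /ys /MT //.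
have SE : S = A2 + (-2) * P + A1.
  rewrite /S /A2 /A1 /P mulr_sumr -!big_split /=; apply: eq_bigr => k _; ring.
have mE : 2 * rho * S <= mI * (A2 - A1 - S).
  have m0 := mI_gt0.
  have : mI * (2 * rho * D) <= mI * (A2 - A1 - S) by rewrite ler_pM2l.
  have : 2 * rho * S <= 2 * rho * (mI * D) by rewrite ler_pM2l ?mulr_gt0.
  nra.
set al := Num.sqrt A2; set ep := Num.sqrt A1.
have al0 : 0 <= al by exact: sqrtr_ge0.
have ep0 : 0 <= ep by exact: sqrtr_ge0.
have A2e : A2 = al ^+ 2 by rewrite sqr_sqrtr // sumr_sq_ge0.
have A1e : A1 = ep ^+ 2 by rewrite sqr_sqrtr // sumr_sq_ge0.
have PCS : P <= al * ep.
  apply: (le_trans (ler_norm _)); exact: (@abs_CS R _ xpredT).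
have key : rho * al ^+ 2 <= (mI + 2 * rho) * (al * ep).
  have m0 := mI_gt0.
  rewrite SE in mE; rewrite -A2e.
  have : (mI + 2 * rho) * P <= (mI + 2 * rho) * (al * ep).
    by rewrite ler_pM2l // addr_gt0 // mulr_gt0.
  have : 0 <= (mI + rho) * A1 by rewrite mulr_ge0 ?sumr_sq_ge0 // addr_ge0 // ltW.
  nra.
have alb : rho * al <= (mI + 2 * rho) * ep.
  have [a0|apos] := eqVneq al 0.
    by rewrite a0 mulr0 mulr_ge0 // addr_ge0 // ?mulr_ge0 // ltW // mI_gt0.
  have ap : 0 < al by rewrite lt_def apos al0.
  rewrite -(ler_pM2l ap); move: key; rewrite expr2; nra.
have epv : ep = rho * vnorm v.
  rewrite /ep /A1 /vnorm vdot_sq -sqrt_sumsq_scale ?ltW //.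
  by congr Num.sqrt; apply: eq_bigr => k _; rewrite zy.
have ynorm : vnorm (fun k => y k - ys k) = al.
  rewrite /vnorm vdot_sq /al /A2; congr Num.sqrt; apply: eq_bigr => k _; ring.
rewrite ynorm; rewrite epv in alb.
have : rho * al <= rho * ((mI + 2 * rho) * vnorm v) by rewrite mulrCA.
by rewrite ler_pM2l.
Qed.


Lemma N_ge_abs x k : `|x k| <= N x (val k).1.
Proof.
rewrite -sqrtr_sqr /blocknorm; apply: ler_wsqrtr.
rewrite (bigD1 k) //= lerDl; apply: sumr_ge0 => i _; exact: sqr_ge0.
Qed.

Lemma f1_ge0 x : 0 <= f1 x.
Proof.
apply: mulr_ge0; first exact: ltW.
apply: sumr_ge0 => g gG.
by apply: mulr_ge0; [exact/ltW/w0 | exact: N_ge0].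
Qed.

Lemma f1_ge_block x k : lambda * w (val k).1 * `|x k| <= f1 x.
Proof.
have kG : (val k).1 \in G by case: k => -[g i] /= /andP[].
rewrite /f1 (bigD1 _ kG) /= mulrDr -mulrA.
apply: ler_wpDr.
  apply: mulr_ge0; first exact: ltW.
  apply: sumr_ge0 => g /andP[gG _].
  by apply: mulr_ge0; [exact/ltW/w0 | exact: N_ge0].
apply: ler_wpM2l; first exact: ltW.
apply: ler_wpM2l; first exact/ltW/w0.
exact: N_ge_abs.
Qed.

Definition Kc (y : I -> R) := L (fun _ => 0) (fun _ => 0) y + \sum_k y k ^+ 2 / rho.

Lemma L_coer y x1 x2 : L x1 x2 y <= L (fun _ => 0) (fun _ => 0) y -> forall k,
  `|x1 k| <= Kc y / (lambda * w (val k).1) /\ `|x2 k - x1 k| <= 4 * Kc y / rho + 1.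
Proof.
move=> H k; rewrite L_unf in H.
have lowt : forall k : I, rho / 4 * (x1 k - x2 k) ^+ 2 - y k ^+ 2 / rho
                          <= y k * (x1 k - x2 k) + rho / 2 * (x1 k - x2 k) ^+ 2.
  move=> j; rewrite -subr_ge0.
  have -> : y j * (x1 j - x2 j) + rho / 2 * (x1 j - x2 j) ^+ 2 -
      (rho / 4 * (x1 j - x2 j) ^+ 2 - y j ^+ 2 / rho) =
      (rho / 2 * (x1 j - x2 j) + y j) ^+ 2 / rho by field; rewrite gt_eqF.
  by rewrite divr_ge0 ?sqr_ge0 // ltW.
have low : rho / 4 * \sum_k (x1 k - x2 k) ^+ 2 - \sum_k y k ^+ 2 / rho <=
           \sum_k y k * (x1 k - x2 k) + rho / 2 * \sum_k (x1 k - x2 k) ^+ 2.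
  rewrite !mulr_sumr -sumrB -big_split /=; apply: ler_sum => j _; exact: lowt.
have t1 : 0 <= 2^-1 * \sum_i (Mop x2 i - b i) ^+ 2.
  by apply: mulr_ge0; [rewrite invr_ge0 | apply: sumr_sq_ge0].
have rk : (x1 k - x2 k) ^+ 2 <= \sum_k (x1 k - x2 k) ^+ 2.
  rewrite (bigD1 k) //= lerDl; apply: sumr_ge0 => i _; exact: sqr_ge0.
have fb := f1_ge_block x1 k.
have f0 := f1_ge0 x1.
have r4 : 0 <= rho / 4 by rewrite divr_ge0 // ltW.
have rk4 := ler_wpM2l r4 rk.
have rs0 : 0 <= rho / 4 * (x1 k - x2 k) ^+ 2 by rewrite mulr_ge0 ?sqr_ge0.
have HK : f1 x1 + rho / 4 * (x1 k - x2 k) ^+ 2 <= Kc y.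
  rewrite /Kc; lra.
have lw : 0 < lambda * w (val k).1.
  by rewrite mulr_gt0 // w0 //; case: k {HK rk rk4 rs0 fb lowt} => -[g i] /= /andP[].
split.
  rewrite ler_pdivlMr //; lra.
have K0 : 0 <= Kc y by lra.
have r2 : (x1 k - x2 k) ^+ 2 <= 4 * Kc y / rho.
  rewrite ler_pdivlMr // mulrC; lra.
rewrite -normrN opprB.
have [le1|gt1] := lerP `|x1 k - x2 k| 1.
  have : 0 <= 4 * Kc y / rho by rewrite divr_ge0 ?mulr_ge0 // ltW.
  lra.
have : `|x1 k - x2 k| <= (x1 k - x2 k) ^+ 2.
  by rewrite -real_normK ?num_real // expr2 ler_peMl // ltW.
lra.
Qed.

End Main.
Section Ex.
Import ArrowAsProduct.
Context (R : realType) (J : finType).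
Local Notation T := (J -> R).

Lemma Cproj j : continuous (fun p : T => p j).
Proof. exact: (@proj_continuous J (fun _ => R) j). Qed.

Lemma Ccst (c : R) : continuous (fun _ : T => c).
Proof. exact: (@cst_continuous T R c). Qed.

Lemma CD (f g : T -> R) : continuous f -> continuous g -> continuous (fun p => f p + g p).
Proof. by move=> cf cg x; exact: (continuousD (cf x) (cg x)). Qed.

Lemma CM (f g : T -> R) : continuous f -> continuous g -> continuous (fun p => f p * g p).
Proof. by move=> cf cg x; exact: (continuousM (cf x) (cg x)). Qed.

Lemma CN (f : T -> R) : continuous f -> continuous (fun p => - f p).
Proof. by move=> cf x; exact: (continuousN (cf x)). Qed.

Lemma CB (f g : T -> R) : continuous f -> continuous g -> continuous (fun p => f p - g p).
Proof. by move=> cf cg; apply: CD => //; apply: CN. Qed.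

Lemma Csqrt (f : T -> R) : continuous f -> continuous (fun p => Num.sqrt (f p)).
Proof. by move=> cf x; apply: continuous_comp; [exact: cf | exact: sqrt_continuous]. Qed.

Lemma Cext (f g : T -> R) : (forall p, f p = g p) -> continuous f -> continuous g.
Proof. by move=> e; have -> : g = f by apply/funext => p; rewrite e. Qed.

Lemma Cexp2 (f : T -> R) : continuous f -> continuous (fun p => f p ^+ 2).
Proof. by move=> cf; apply: (@Cext (fun p => f p * f p)); [move=> p; rewrite expr2 | exact: CM]. Qed.

Lemma Csum (K : Type) (s : seq K) (P : pred K) (F : K -> T -> R) :
  (forall i, continuous (F i)) -> continuous (fun p => \sum_(i <- s | P i) F i p).
Proof.
move=> cF; elim: s => [|a s IH].
  by apply: (@Cext (fun _ => 0)); [move=> p; rewrite big_nil | exact: Ccst].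
case Pa: (P a).
  apply: (@Cext (fun p => F a p + \sum_(i <- s | P i) F i p)).
    by move=> p; rewrite big_cons Pa.
  exact: CD.
apply: (@Cext (fun p => \sum_(i <- s | P i) F i p)) => //.
by move=> p; rewrite big_cons Pa.
Qed.

Lemma exists_min (F : T -> R) (B : J -> R) : continuous F ->
  (forall p, F p <= F (fun _ => 0) -> forall j, `|p j| <= B j) ->
  exists p, forall q, F p <= F q.
Proof.
move=> cF hB.
set A := [set p : T | forall j, `[- B j, B j]%classic (p j)].
have cA : compact A.
  by apply: (@tychonoff J (fun _ => R) (fun j => `[- B j, B j]%classic)) => j; exact: segment_compact.
have A0 : A (fun _ => 0).
  move=> j; have := hB (fun _ => 0) (lexx _) j.
  by rewrite /= in_itv /= normr0 => h; rewrite oppr_le0 h.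
have [c cA' cmin] := compact_EVT_min (ex_intro _ _ A0) cA (continuous_subspaceT cF).
exists c => q.
have [qA|qnA] := pselect (A q).
  by apply: cmin; rewrite inE.
have : ~ (F q <= F (fun _ => 0)).
  move=> h; apply: qnA => j; have := hB q h j.
  by rewrite /= in_itv /= ler_norml.
move/negP; rewrite -ltNge => h.
by apply/ltW/(le_lt_trans _ h)/cmin; rewrite inE.
Qed.

End Ex.

Section Final.
Import ArrowAsProduct.
Variables (R : realType) (d : nat) (G : {set {set 'I_d}}).
Local Notation I := (gidx d G).
Variables (lambda rho : R) (w : {set 'I_d} -> R) (b : 'I_d -> R).
Hypotheses (lam0 : 0 < lambda) (w0 : forall g, g \in G -> 0 < w g) (rho0 : 0 < rho).
Local Notation L := (Lrho R d G lambda rho w b).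

Ltac cont := repeat first [ apply: Ccst | apply: CD | apply: CB | apply: CM
   | apply: Cexp2 | apply: Csqrt | apply: Csum => ? | apply: CN | apply: Cproj ].

Lemma contL (J : finType) (e1 e2 : I -> J) (y : I -> R) :
  continuous (fun p : J -> R => L (fun k => p (e1 k)) (fun k => p (e2 k)) y).
Proof.
apply: (@Cext _ _ (fun p : J -> R =>
   lambda * (\sum_(g in G) w g * Num.sqrt (\sum_(k : I | (val k).1 == g) p (e1 k) ^+ 2))
   + 2^-1 * \sum_i (\sum_(k : I | (val k).2 == i) p (e2 k) - b i) ^+ 2
   + \sum_k y k * (p (e1 k) - p (e2 k)) + rho / 2 * \sum_k (p (e1 k) - p (e2 k)) ^+ 2)).
  by move=> p; rewrite L_unf.
cont.
Qed.

Lemma EX1 y : exists x1 x2, forall x1' x2', L x1 x2 y <= L x1' x2' y.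
Proof.
have cF := @contL (I + I)%type inl inr y.
set B := fun j : (I + I)%type => match j with
  | inl k => Kc R d G lambda rho w b y / (lambda * w (val k).1)
  | inr k => Kc R d G lambda rho w b y / (lambda * w (val k).1)
             + (4 * Kc R d G lambda rho w b y / rho + 1) end.
have hB : forall p, (fun p : (I + I)%type -> R => L (fun k => p (inl k)) (fun k => p (inr k)) y) p
   <= (fun p : (I + I)%type -> R => L (fun k => p (inl k)) (fun k => p (inr k)) y) (fun _ => 0)
   -> forall j, `|p j| <= B j.
  move=> p hp [k|k] /=.
    by have [h1 h2] := @L_coer R d G lambda rho w b lam0 w0 rho0 _ _ _ hp k.
  have [h1 h2] := @L_coer R d G lambda rho w b lam0 w0 rho0 _ _ _ hp k.
  have := ler_normD (p (inl k)) (p (inr k) - p (inl k)); rewrite addrC subrK => h.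
  lra.
have [p hp] := @exists_min R _ _ _ cF hB.
exists (fun k => p (inl k)), (fun k => p (inr k)) => x1' x2'.
exact: (hp (fun j => match j with inl k => x1' k | inr k => x2' k end)).
Qed.

Lemma EX2 : exists x, forall x', L x x 0 <= L x' x' 0.
Proof.
have cF := @contL I id id 0.
set B := fun k : I => Kc R d G lambda rho w b 0 / (lambda * w (val k).1).
have hB : forall p, (fun p : I -> R => L (fun k => p (id k)) (fun k => p (id k)) 0) p
   <= (fun p : I -> R => L (fun k => p (id k)) (fun k => p (id k)) 0) (fun _ => 0)
   -> forall j, `|p j| <= B j.
  by move=> p hp k; have [h1 h2] := @L_coer R d G lambda rho w b lam0 w0 rho0 _ _ _ hp k.
have [p hp] := @exists_min R _ _ _ cF hB.
by exists (fun k => p k) => x'; exact: (hp x').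
Qed.

End Final.

Theorem lemma3p1 (R : realType) (d : nat) (G : {set {set 'I_d}})
  (lambda rho : R) (w : {set 'I_d} -> R) (b : 'I_d -> R) :
  (forall g, g \in G -> (0 < #|g|)%N) ->
  0 < lambda -> (forall g, g \in G -> 0 < w g) -> 0 < rho ->
  Ystar R d G lambda rho w b !=set0 /\
  exists2 tau : R, 0 < tau &
    forall y : gidx d G -> R, exists v : gidx d G -> R,
      is_gradient R d G (grho R d G lambda rho w b) y v /\
      vdist R d G y (Ystar R d G lambda rho w b) <= tau * vnorm R d G v.
Proof.
move=> _ lam0 w0 rho0.
exact: (@main_of_ex R d G lambda rho w b lam0 w0 rho0
  (@EX1 R d G lambda rho w b lam0 w0 rho0) (@EX2 R d G lambda rho w b lam0 w0 rho0)).
Qed.
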